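(* Assume that for all real $z\ge 1$ one has $\bigl|\sum_{n\le z}\mu(n)^2 - \tfrac{6}{\pi^2}z\bigr|\le 0.68\sqrt z$. Then for all real $z\geq 1$, \[ \Biggl|\sum_{n\leq z} \frac{\mu(n)^2}{n} - \frac{\log z}{\zeta(2)} - A\Biggr| \leq \frac{2.04}{\sqrt{z}}, \qquad\text{where } A=\frac{\gamma}{\zeta(2)}-2\frac{\zeta'(2)}{\zeta(2)^2}, \] $\gamma$ being the Euler–Mascheroni constant.
   Context: $\mu$ is the Möbius function and $\zeta$ the Riemann zeta function. *)

(* Defs.v *)
From mathcomp Require Import ssreflect ssrfun ssrbool eqtype ssrnat seq prime.
From Stdlib Require Import Reals ClassicalEpsilon.

(** Moebius function: mu 0 = 0 (convention, never used), mu n = (-1)^k if n is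
    squarefree with k distinct prime factors, and 0 otherwise. *)
Definition squarefree (n : nat) : bool :=
  (0 < n) && all (fun p => logn p n == 1) (primes n).

Definition mobius (n : nat) : Z :=
  if squarefree n then (if odd (size (primes n)) then (-1)%Z else 1%Z) else 0%Z.

Local Open Scope R_scope.

Fixpoint sum_1_to (f : nat -> R) (N : nat) : R :=
  match N with
  | O => 0
  | S k => sum_1_to f k + f (S k)
  end.

(** floor of a real number, as a natural number (for z >= 0). *)
Definition nat_floor (z : R) : nat := Z.to_nat (Int_part z).

Definition sum_le (f : nat -> R) (z : R) : R := sum_1_to f (nat_floor z).

Definition zeta (s : R) : R :=
  epsilon (inhabits 0) (fun l => infinite_sum (fun n => / Rpower (INR (S n)) s) l).

Definition zeta'2 : R :=
  epsilon (inhabits 0) (fun l => derivable_pt_lim zeta 2 l).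

Definition euler_gamma : R :=
  epsilon (inhabits 0)
    (fun l => Un_cv (fun N => sum_1_to (fun n => / INR n) N - ln (INR N)) l).

(* Main.v *)
Require Import Defs.
From Stdlib Require Import Reals.
Open Scope R_scope.
From Stdlib Require Import Lra Lia ClassicalEpsilon FunctionalExtensionality ZArith.
From mathcomp Require Import ssreflect ssrfun ssrbool eqtype ssrnat seq div prime.
Open Scope R_scope.

Lemma primes_pe p e : prime p -> (0 < e)%N -> ~~ (p %| e) ->
  perm_eq (primes (p * e)) (p :: primes e).
Proof.
move=> pp e0 npe; apply: uniq_perm.
- exact: primes_uniq.
- rewrite /= primes_uniq andbT mem_primes.
  by rewrite (negbTE npe) !andbF.
move=> q; rewrite in_cons (primesM _ (prime_gt0 pp) e0).
by rewrite /= (primes_prime pp) inE orbC.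
Qed.

Lemma mobius_pe p e : prime p -> (0 < e)%N -> ~~ (p %| e) ->
  mobius (p * e) = (- mobius e)%Z.
Proof.
move=> pp e0 npe. have hp := primes_pe _ _ pp e0 npe.
have pe0 : (0 < p * e)%N by rewrite muln_gt0 prime_gt0.
rewrite /mobius /squarefree pe0 e0 /=.
rewrite (perm_size hp) /=.
have -> : all (fun q => logn q (p * e) == 1%N) (primes (p * e)) =
          all (fun q => logn q e == 1%N) (primes e).
  rewrite (perm_all _ hp) /=.
  rewrite (lognM _ (prime_gt0 pp) e0) (logn_prime _ pp) eqxx.
  have -> : logn p e = 0%N.
    apply/eqP; rewrite -leqn0 leqNgt logn_gt0 mem_primes pp e0 /=. exact: npe.
  rewrite /=. apply: eq_in_all => q; rewrite mem_primes => /and3P [qp _ qe].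
  rewrite (lognM _ (prime_gt0 pp) e0) (logn_prime _ pp).
  have -> : (q == p) = false by apply/eqP => E; subst q; rewrite qe in npe.
  by rewrite add0n.
case: (all (fun q => logn q e == 1%N) (primes e)) => //. by case: (odd _).
Qed.

Lemma mobius_ppe p e : prime p -> (0 < e)%N -> mobius (p * p * e) = 0%Z.
Proof.
move=> pp e0. rewrite /mobius /squarefree.
have h : p \in primes (p * p * e).
  rewrite mem_primes pp !muln_gt0 prime_gt0 // e0 /=. by rewrite -mulnA dvdn_mulr.
case E : (_ && _) => //. move/andP: E => [_ /allP H].
have := H p h. have p0 := prime_gt0 pp.
rewrite -mulnA (lognM _ p0); last by rewrite muln_gt0 p0 e0.
rewrite (lognM _ p0 e0) (logn_prime _ pp) eqxx. by case: (logn p e).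
Qed.

Lemma mobius1 : mobius 1 = 1%Z.
Proof. by []. Qed.
Lemma mobius0 : mobius 0 = 0%Z.
Proof. by []. Qed.

Lemma sum_S f N : sum_1_to f N.+1 = sum_1_to f N + f N.+1.
Proof. by []. Qed.
Lemma sum_O f : sum_1_to f 0 = 0.
Proof. by []. Qed.

Lemma sum_ext f g N : (forall k, (0 < k <= N)%N -> f k = g k) ->
  sum_1_to f N = sum_1_to g N.
Proof.
elim: N => [//|N IH] H /=. rewrite IH ?H //.
  by rewrite ltnSn andbT.
move=> k /andP [k0 kN]. apply: H. by rewrite k0 (leq_trans kN).
Qed.

Lemma sum_add f g N : sum_1_to (fun k => f k + g k) N = sum_1_to f N + sum_1_to g N.
Proof. elim: N => [/=|N IH] /=; [lra| rewrite IH; lra]. Qed.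

Lemma sum_scal c f N : sum_1_to (fun k => c * f k) N = c * sum_1_to f N.
Proof. elim: N => [/=|N IH] /=; [lra| rewrite IH; lra]. Qed.

Lemma sum_opp f N : sum_1_to (fun k => - f k) N = - sum_1_to f N.
Proof. elim: N => [/=|N IH] /=; [lra| rewrite IH; lra]. Qed.

Lemma sum_sub f g N : sum_1_to (fun k => f k - g k) N = sum_1_to f N - sum_1_to g N.
Proof. elim: N => [/=|N IH] /=; [lra| rewrite IH; lra]. Qed.

Lemma sum_0 N : sum_1_to (fun _ => 0) N = 0.
Proof. elim: N => [/=|N IH] /=; [lra| rewrite IH; lra]. Qed.

Lemma sum_const c N : sum_1_to (fun _ => c) N = INR N * c.
Proof. elim: N => [|N IH]; first by simpl; lra. rewrite [sum_1_to _ _]/= IH S_INR; lra. Qed.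

Lemma sum_le_le f g N : (forall k, (0 < k <= N)%N -> f k <= g k) ->
  sum_1_to f N <= sum_1_to g N.
Proof.
elim: N => [/=|N IH] H /=; first lra.
have h1 : f N.+1 <= g N.+1 by apply: H; rewrite ltnSn andbT.
have h2 : sum_1_to f N <= sum_1_to g N.
  apply: IH => k /andP [k0 kN]; apply: H; by rewrite k0 (leq_trans kN).
lra.
Qed.

Lemma sum_abs f N : Rabs (sum_1_to f N) <= sum_1_to (fun k => Rabs (f k)) N.
Proof.
elim: N => [|N IH]; first by rewrite !sum_O Rabs_R0; lra.
rewrite !sum_S. apply: Rle_trans (Rabs_triang _ _) _. lra.
Qed.

Lemma sum_split f a b :
  sum_1_to f (a + b) = sum_1_to f a + sum_1_to (fun k => f (a + k)%N) b.
Proof.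
elim: b => [|b IH]; first by rewrite addn0 /=; lra.
by rewrite addnS !sum_S IH addnS; lra.
Qed.

Lemma sum_stop f N N' : (N <= N')%N -> (forall k, (N < k <= N')%N -> f k = 0) ->
  sum_1_to f N' = sum_1_to f N.
Proof.
move=> /subnKC <-. set b := (N' - N)%N. clearbody b.
move=> H. rewrite sum_split.
rewrite (sum_ext (fun k => f (N + k)%N) (fun _ => 0) b) ?sum_0; first lra.
move=> k /andP [k0 kb]; apply: H. by rewrite -addn1 leq_add2l k0 leq_add2l.
Qed.

Lemma sum_delta m x N :
  sum_1_to (fun k => if k == m then x else 0) N = if (0 < m <= N)%N then x else 0.
Proof.
elim: N => [|N IH].
  by rewrite sum_O; case: m.
rewrite sum_S IH.
case: (ltngtP m N.+1) => [h1|h2|h3].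
- rewrite (_ : (m <= N)%N = true); last by rewrite -ltnS.
  by rewrite andbT Rplus_0_r.
- have -> : (m <= N)%N = false by apply/negbTE; rewrite -ltnNge; exact: ltnW h2.
  by rewrite andbF Rplus_0_r.
- rewrite h3 ltnn andbF andbT ltn0Sn; lra.
Qed.

Lemma sum_swap (g : nat -> nat -> R) N1 N2 :
  sum_1_to (fun d => sum_1_to (fun e => g d e) N2) N1 =
  sum_1_to (fun e => sum_1_to (fun d => g d e) N1) N2.
Proof.
elim: N1 => [|N1 IH] /=; first by rewrite sum_0.
by rewrite IH -sum_add.
Qed.

Lemma sum_rdx q f n : (0 < q)%N ->
  sum_1_to (fun d => if q %| d then f d else 0) n = sum_1_to (fun k => f (q * k)%N) (n %/ q).
Proof.
move=> q0. elim: n => [|n IH]; first by rewrite div0n.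
rewrite sum_S IH (divnS _ q0).
case E : (q %| n.+1); last by rewrite add0n; lra.
rewrite add1n sum_S. congr (_ + _). congr f.
by rewrite -{1}(divnK E) mulnC (divnS _ q0) E add1n.
Qed.


Definition mu (n : nat) : R := IZR (mobius n).

Lemma mu_pk p k : prime p -> (0 < k)%N -> mu (p * k) = if p %| k then 0 else - mu k.
Proof.
move=> pp k0. rewrite /mu. case E : (p %| k).
- move: E => /dvdnP [k' kk]. subst k.
  rewrite (mulnC k' p) mulnA mobius_ppe //.
  move: k0. by rewrite muln_gt0 => /andP [].
- rewrite mobius_pe ?E // opp_IZR. by [].
Qed.

Lemma mu1 : mu 1 = 1.
Proof. by rewrite /mu mobius1. Qed.

Lemma split_by_p p f n : sum_1_to f n =
  sum_1_to (fun d => if p %| d then f d else 0) n +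
  sum_1_to (fun d => if p %| d then 0 else f d) n.
Proof. rewrite -sum_add. apply: sum_ext => k _. case: (p %| k); lra. Qed.

Lemma sum_restrict f N M : (M <= N)%N -> (forall d, (M < d)%N -> f d = 0) ->
  sum_1_to f N = sum_1_to f M.
Proof. move=> h H. apply: sum_stop => // k /andP [k1 _]. exact: H. Qed.

Lemma mobius_sum n : (0 < n)%N ->
  sum_1_to (fun d => if d %| n then mu d else 0) n = if n == 1%N then 1 else 0.
Proof.
move=> n0. case: (ltngtP n 1) => [|n1|->]; first by rewrite ltnNge n0.
2: by rewrite /= mu1; lra.

set p := pdiv n. have pp : prime p by exact: pdiv_prime.
have p0 : (0 < p)%N by exact: prime_gt0.
have pn : p %| n by exact: pdiv_dvd.
set m := (n %/ p)%N. have nm : n = (p * m)%N by rewrite /m mulnC divnK.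
have m0 : (0 < m)%N by move: n0; rewrite nm muln_gt0 => /andP [].
have mn : (m <= n)%N by rewrite nm leq_pmull.
rewrite (split_by_p p) sum_rdx // -/m.
rewrite (sum_ext _ (fun k => if k %| m then (if p %| k then 0 else - mu k) else 0)); last first.
  move=> k /andP [k0 _]. rewrite nm dvdn_pmul2l // mu_pk //.
rewrite (sum_ext (fun d => if p %| d then 0 else if d %| n then mu d else 0)
                 (fun d => if p %| d then 0 else if d %| m then mu d else 0)); last first.
  move=> d _. case E : (p %| d) => //. rewrite nm Gauss_dvdr //.
  by rewrite coprime_sym prime_coprime // E.
rewrite (sum_restrict _ n m) //; last first.
  move=> d dm. case: (p %| d) => //. case E : (d %| m) => //.
  by have := dvdn_leq m0 E; rewrite leqNgt dm.
rewrite -sum_add (sum_ext _ (fun _ => 0)) ?sum_0 //.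
move=> k _. case: (k %| m); case: (p %| k); lra.
Qed.

Lemma sq_sum n : (0 < n)%N ->
  sum_1_to (fun d => if (d * d) %| n then mu d else 0) n = mu n ^ 2.
Proof.
elim: n {-2}n (leqnn n) => [n|N IH n]; first by rewrite leqn0 => /eqP ->.
move=> nN n0. case: (ltngtP n 1) => [|n1|->]; first by rewrite ltnNge n0.
2: by rewrite /= mu1; lra.
set p := pdiv n. have pp : prime p by exact: pdiv_prime.
have p0 : (0 < p)%N by exact: prime_gt0.
have p1 : (1 < p)%N by exact: prime_gt1.
have pn : p %| n by exact: pdiv_dvd.
set m := (n %/ p)%N. have nm : n = (p * m)%N by rewrite /m mulnC divnK.
have m0 : (0 < m)%N by move: n0; rewrite nm muln_gt0 => /andP [].
have mn : (m <= n)%N by rewrite nm leq_pmull.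
rewrite (split_by_p p) sum_rdx // -/m.
have sq_le : forall d M, (0 < M)%N -> d * d %| M -> (d <= M)%N.
  move=> d M M0 h. have := dvdn_leq M0 h. case: d {h} => // d.
  move=> h; apply: leq_trans h. by rewrite leq_pmulr.
case E : (p %| m).
- move: E => /dvdnP [m' mm]. rewrite mulnC in mm.
  have m'0 : (0 < m')%N by move: m0; rewrite mm muln_gt0 => /andP [].
  have nm' : n = (p * p * m')%N by rewrite nm mm mulnA.
  rewrite (sum_ext _ (fun k => if k * k %| m' then (if p %| k then 0 else - mu k) else 0)); last first.
    move=> k /andP [k0 _]. rewrite nm' mu_pk //.
    rewrite (_ : (p * k * (p * k))%N = (p * p * (k * k))%N); last by rewrite mulnACA.
    by rewrite dvdn_pmul2l ?muln_gt0 ?p0.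
  rewrite (sum_ext (fun d => if p %| d then 0 else if d * d %| n then mu d else 0)
                 (fun d => if p %| d then 0 else if d * d %| m' then mu d else 0)); last first.
    move=> d _. case E : (p %| d) => //. rewrite nm' Gauss_dvdr //.
    by rewrite coprimeMl coprimeMr coprime_sym prime_coprime // E.
  rewrite (sum_restrict _ n m) //; last first.
    move=> d dm. case: (p %| d) => //. case E : (d * d %| m') => //.
    have := sq_le d m' m'0 E. rewrite leqNgt. have : (m' <= m)%N by rewrite mm leq_pmull.
    move=> h1 h2. by rewrite (leq_ltn_trans h1 dm) in h2.
  rewrite -sum_add (sum_ext _ (fun _ => 0)) ?sum_0; last first.
    move=> k _. case: (k * k %| m'); case: (p %| k); lra.
  rewrite nm mm mu_pk ?dvdn_mulr //; first lra.
  by rewrite muln_gt0 p0 m'0.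
- rewrite (sum_ext (fun k => if p * k * (p * k) %| n then mu (p * k) else 0) (fun _ => 0)); last first.
    move=> k _. case F : (p * k * (p * k) %| n) => //.
    move: F. rewrite nm (_ : (p * k * (p * k))%N = (p * (p * k * k))%N); last by rewrite -mulnA [(k * _)%N]mulnC.
    rewrite dvdn_pmul2l // => F. have := dvdn_trans (dvdn_mulr _ (dvdn_mulr _ (dvdnn p))) F.
    by rewrite E.
  rewrite sum_0 Rplus_0_l.
  rewrite (sum_ext (fun d => if p %| d then 0 else if d * d %| n then mu d else 0)
                 (fun d => if d * d %| m then mu d else 0)); last first.
    move=> d _. case F : (p %| d).
    + case G : (d * d %| m) => //. move: F => /dvdnP [d' dd]. subst d.
      have := dvdn_trans (dvdn_mull _ (dvdn_mull _ (dvdnn p))) G. by rewrite E.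
    + rewrite nm Gauss_dvdr //. by rewrite coprimeMl coprime_sym prime_coprime // F.
  rewrite (sum_restrict _ n m) //; last first.
    move=> d dm. case G : (d * d %| m) => //.
    by have := sq_le d m m0 G; rewrite leqNgt dm.
  rewrite IH //; last first.
    rewrite -ltnS. apply: leq_trans nN. rewrite nm. by rewrite -{1}(mul1n m) ltn_pmul2r.
  rewrite nm mu_pk ?E //. lra.
Qed.

Lemma ln_le_sub1 x : 0 < x -> ln x <= x - 1.
Proof. move=> x0. have := exp_ineq1_le (ln x). rewrite exp_ln //. lra. Qed.

Lemma ln_ge0 x : 1 <= x -> 0 <= ln x.
Proof.
move=> x1. case: (Rle_lt_or_eq_dec _ _ x1) => h.
- rewrite -ln_1. left. apply: ln_increasing; lra.
- rewrite -h ln_1; lra.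
Qed.

Lemma ln_le x y : 0 < x -> x <= y -> ln x <= ln y.
Proof.
move=> x0 xy. case: (Rle_lt_or_eq_dec _ _ xy) => h.
- left; exact: ln_increasing.
- rewrite h; lra.
Qed.

Lemma ln_le_2sqrt x : 0 < x -> ln x <= 2 * sqrt x.
Proof.
move=> x0. have s0 : 0 < sqrt x by apply: sqrt_lt_R0.
have : ln x = 2 * ln (sqrt x).
  rewrite -{1}(sqrt_sqrt x); last lra. rewrite ln_mult //; lra.
move=> ->. have := ln_le_sub1 _ s0. lra.
Qed.

Lemma INR_pos n : (0 < n)%N -> 0 < INR n.
Proof. move=> h. apply: lt_0_INR. by apply/ltP. Qed.

Lemma INR_ge1 n : (0 < n)%N -> 1 <= INR n.
Proof. move=> h. have := le_INR 1 n. rewrite /=. move=> H; apply: H. by apply/leP. Qed.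

Lemma INR_Sn n : INR n.+1 = INR n + 1.
Proof. exact: S_INR. Qed.

Lemma ln_step_le n : (0 < n)%N -> ln (INR n.+1) - ln (INR n) <= / INR n.
Proof.
move=> n0. have h := INR_pos _ n0. rewrite INR_Sn.
have -> : ln (INR n + 1) - ln (INR n) = ln ((INR n + 1) / INR n).
  rewrite /Rdiv ln_mult ?ln_Rinv //; try lra. apply: Rinv_0_lt_compat; lra.
have := ln_le_sub1 ((INR n + 1) / INR n). 
have -> : (INR n + 1) / INR n - 1 = / INR n by field; lra.
move=> H; apply: H. apply: Rdiv_lt_0_compat; lra.
Qed.

Lemma ln_step_ge n : (0 < n)%N -> / INR n.+1 <= ln (INR n.+1) - ln (INR n).
Proof.
move=> n0. have h0 := INR_pos _ n0. rewrite INR_Sn.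
have -> : ln (INR n + 1) - ln (INR n) = - ln (INR n / (INR n + 1)).
  rewrite /Rdiv ln_mult ?ln_Rinv; try lra; try (apply: Rinv_0_lt_compat; lra).
have := ln_le_sub1 (INR n / (INR n + 1)).
have -> : INR n / (INR n + 1) - 1 = - / (INR n + 1) by field; lra.
move=> H. have : ln (INR n / (INR n + 1)) <= - / (INR n + 1).
  apply: H. apply: Rdiv_lt_0_compat; lra.
lra.
Qed.

Lemma abs_le_inv x r : Rabs x <= r -> - r <= x /\ x <= r.
Proof. move=> h. have := Rle_abs x. have := Rle_abs (- x). rewrite Rabs_Ropp. lra. Qed.

Lemma cv_ge u l c N : Un_cv u l -> (forall m, (N <= m)%N -> c <= u m) -> c <= l.
Proof.
move=> cv H. apply: Rnot_lt_le => lc.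
have [M HM] := cv (c - l) ltac:(lra).
have := HM (maxn M N) ltac:(apply/leP; exact: leq_maxl).
have := H (maxn M N) (leq_maxr _ _). rewrite /R_dist /Rdist.
move=> h1 h2. have := Rle_abs (u (maxn M N) - l). lra.
Qed.

Lemma cv_le u l c N : Un_cv u l -> (forall m, (N <= m)%N -> u m <= c) -> l <= c.
Proof.
move=> cv H. apply: Rnot_lt_le => lc.
have [M HM] := cv (l - c) ltac:(lra).
have := HM (maxn M N) ltac:(apply/leP; exact: leq_maxl).
have := H (maxn M N) (leq_maxr _ _). rewrite /R_dist /Rdist.
move=> h1 h2. have := Rle_abs (- (u (maxn M N) - l)). rewrite Rabs_Ropp. lra.
Qed.

Lemma cv_abs_le u l c r N : Un_cv u l -> (forall m, (N <= m)%N -> Rabs (u m - c) <= r) ->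
  Rabs (l - c) <= r.
Proof.
move=> cv H. have h1 : c - r <= l.
  apply: (cv_ge _ _ _ N cv) => m /H h. have := abs_le_inv _ _ h. lra.
have h2 : l <= c + r.
  apply: (cv_le _ _ _ N cv) => m /H h. have := abs_le_inv _ _ h. lra.
apply: Rabs_le. lra.
Qed.

Lemma cv_shift u l : Un_cv (fun n => u n.+1) l -> Un_cv u l.
Proof.
move=> cv eps e0. have [N HN] := cv eps e0. exists N.+1 => n nN.
destruct n as [|n']; first lia. apply: HN. lia.
Qed.

Definition Hs (N : nat) : R := sum_1_to (fun n => / INR n) N.

Lemma Hs_ge_ln N : ln (INR N.+1) <= Hs N.
Proof.
elim: N => [|N IH]. rewrite /Hs /= ln_1; lra.
rewrite /Hs sum_S -/(Hs N). have := ln_step_le N.+1 isT. lra.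
Qed.

Lemma gamma_cv : Un_cv (fun N => Hs N - ln (INR N)) euler_gamma.
Proof.
set g := fun n => Hs n.+1 - ln (INR n.+1).
have gd : Un_decreasing g.
  move=> n. rewrite /g /Hs sum_S -/(Hs n.+1). have := ln_step_ge n.+1 isT. lra.
have glb : has_lb g.
  exists 0 => x [n ->]. rewrite /opp_seq /g. have := Hs_ge_ln n.+1.
  have h : INR n.+1 <= INR n.+2 by rewrite (INR_Sn n.+1); lra.
  have := ln_le (INR n.+1) (INR n.+2) (INR_pos n.+1 isT) h. lra.
have [l Hl] := decreasing_cv g gd glb.
have cvl : Un_cv (fun N => Hs N - ln (INR N)) l by apply: cv_shift.
have E : exists l, Un_cv (fun N => sum_1_to (fun n => / INR n) N - ln (INR N)) l by exists l.
have := epsilon_spec (inhabits 0) _ E. rewrite -/euler_gamma. move=> h.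
by rewrite (UL_sequence _ _ _ h cvl).
Qed.

Lemma gamma_le n : (0 < n)%N -> euler_gamma <= Hs n - ln (INR n).
Proof.
move=> n0. apply: (cv_le _ _ _ n gamma_cv) => m nm.
have : (forall k, Hs (n + k) - ln (INR (n + k)) <= Hs n - ln (INR n)).
  elim=> [|k IH]; first by rewrite addn0; lra.
  rewrite addnS (_ : Hs (n+k).+1 = Hs (n+k) + / INR (n+k).+1) //.
  have := ln_step_ge (n + k) ltac:(by rewrite addn_gt0 n0). lra.
move=> H. rewrite -(subnKC nm). apply: H.
Qed.

Lemma gamma_ge n : Hs n - ln (INR n.+1) <= euler_gamma.
Proof.
apply: (cv_ge _ _ _ n.+1 gamma_cv) => m nm.
have : (forall k, Hs n - ln (INR n.+1) <= Hs (n + k) - ln (INR (n + k).+1)).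
  elim=> [|k IH]; first by rewrite addn0; lra.
  rewrite addnS (_ : Hs (n+k).+1 = Hs (n+k) + / INR (n+k).+1) //.
  have := ln_step_le (n + k).+1 isT. lra.
move=> H. have m0 : (0 < m)%N by apply: leq_trans nm.
have := H (m - n)%N. rewrite subnKC; last by apply: ltnW.
have := ln_le (INR m) (INR m.+1) (INR_pos _ m0) ltac:(rewrite INR_Sn; lra). lra.
Qed.

Lemma gamma_bound k y : (0 < k)%N -> INR k <= y -> y < INR k + 1 ->
  Rabs (Hs k - ln y - euler_gamma) <= / INR k.
Proof.
move=> k0 ky yk. have h0 := INR_pos _ k0.
have l1 := ln_le _ _ h0 ky.
have l2 : ln y <= ln (INR k.+1) by apply: ln_le; rewrite ?INR_Sn; lra.
have s := ln_step_le k k0. have g1 := gamma_le k k0. have g2 := gamma_ge k.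
apply: Rabs_le. lra.
Qed.

Definition abs_seq (a : nat -> R) := fun n => Rabs (a n).

Section Tele.
Variables (a t : nat -> R).
Hypothesis ht0 : forall n, 0 <= t n.
Hypothesis hat : forall n, (0 < n)%N -> Rabs (a n.+1) <= t n - t n.+1.

Lemma tele_abs K j : (0 < K)%N ->
  sum_1_to (abs_seq a) (K + j) - sum_1_to (abs_seq a) K <= t K - t (K + j).
Proof.
move=> K0. elim: j => [|j IH]; first by rewrite addn0; lra.
rewrite addnS sum_S. have := hat (K + j) ltac:(by rewrite addn_gt0 K0). rewrite /abs_seq in IH *. lra.
Qed.

Lemma t_decr K M : (0 < K)%N -> (K <= M)%N -> t M <= t K.
Proof.
move=> K0 KM. rewrite -(subnKC KM). have := tele_abs K (M - K) K0.
have : 0 <= sum_1_to (abs_seq a) (K + (M - K)) - sum_1_to (abs_seq a) K.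
  rewrite sum_split. have := sum_le_le (fun _ => 0) (fun k => abs_seq a (K + k)%N) (M - K).
  rewrite sum_0 => h. have : 0 <= sum_1_to (fun k => abs_seq a (K + k)%N) (M - K).
    apply: h => k _. exact: Rabs_pos.
  lra.
lra.
Qed.

Lemma tail_bound K M N : (0 < K)%N -> (K <= M)%N -> (M <= N)%N ->
  Rabs (sum_1_to a N - sum_1_to a M) <= t K.
Proof.
move=> K0 KM MN. rewrite -(subnKC MN) sum_split.
have -> : sum_1_to a M + sum_1_to (fun k => a (M + k)%N) (N - M) - sum_1_to a M =
   sum_1_to (fun k => a (M + k)%N) (N - M) by ring.
apply: Rle_trans (sum_abs _ _) _.
have := tele_abs M (N - M) (leq_trans K0 KM). rewrite sum_split /abs_seq.
have := t_decr K M K0 KM. have := ht0 (M + (N - M)). lra.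
Qed.

Lemma total_bound N : sum_1_to (abs_seq a) N <= Rabs (a 1%N) + t 1%N.
Proof.
case: N => [|N]; first by rewrite sum_O; have := Rabs_pos (a 1%N); have := ht0 1; lra.
have := tele_abs 1 N isT. rewrite add1n /= /abs_seq. have := ht0 N.+1. lra.
Qed.

Hypothesis ht : forall eps, 0 < eps -> exists N, forall n, (N <= n)%N -> t n < eps.

Lemma tele_lim : {l | Un_cv (sum_1_to a) l /\
   forall K, (0 < K)%N -> Rabs (l - sum_1_to a K) <= t K}.
Proof.
have cc : Cauchy_crit (sum_1_to a).
  move=> eps e0. have [N HN] := ht (eps / 2) ltac:(lra).
  exists (maxn N 1) => n m /leP nN /leP mN. rewrite /R_dist /Rdist.
  have h1 := tail_bound (maxn N 1) (maxn N 1) n ltac:(by rewrite leq_max orbT) (leqnn _) nN.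
  have h2 := tail_bound (maxn N 1) (maxn N 1) m ltac:(by rewrite leq_max orbT) (leqnn _) mN.
  have h3 := HN (maxn N 1) (leq_maxl _ _).
  have := Rabs_triang (sum_1_to a n - sum_1_to a (maxn N 1)) (sum_1_to a (maxn N 1) - sum_1_to a m).
  rewrite Rabs_minus_sym in h2.
  have -> : sum_1_to a n - sum_1_to a (maxn N 1) + (sum_1_to a (maxn N 1) - sum_1_to a m) =
     sum_1_to a n - sum_1_to a m by ring.
  lra.
have [l Hl] := R_complete _ cc. exists l; split => // K K0.
apply: (cv_abs_le _ _ _ _ K Hl) => m Km. exact: tail_bound.
Qed.

End Tele.

Lemma inv_sq_tele n : (0 < n)%N -> / (INR n.+1 * INR n.+1) <= / INR n - / INR n.+1.
Proof.
move=> n0. have h := INR_pos _ n0. rewrite INR_Sn.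
have -> : / INR n - / (INR n + 1) = / (INR n * (INR n + 1)) by field; lra.
apply: Rinv_le_contravar. nra. nra.
Qed.

Lemma sqrt_tele n : (0 < n)%N ->
  / (INR n.+1 * sqrt (INR n.+1)) <= 2 * (/ sqrt (INR n) - / sqrt (INR n.+1)).
Proof.
move=> n0. have h := INR_pos _ n0.
set x := sqrt (INR n). set y := sqrt (INR n.+1).
have x0 : 0 < x by apply: sqrt_lt_R0.
have y0 : 0 < y by apply: sqrt_lt_R0; rewrite INR_Sn; lra.
have xx : x * x = INR n by apply: sqrt_sqrt; lra.
have yy : y * y = INR n.+1 by apply: sqrt_sqrt; rewrite INR_Sn; lra.
rewrite -yy.
have yy' := yy. rewrite INR_Sn in yy'.
have xy : x < y by nra.
have key : x <= 2 * (y * y) * (y - x) by nra.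
have -> : 2 * (/ x - / y) = (2 * (y - x)) / (x * y) by field; lra.
have -> : / (y * y * y) = x / (x * (y * y * y)) by field; lra.
rewrite /Rdiv. 
apply: Rle_trans (_ : (2 * (y * y) * (y - x)) * / (x * (y * y * y)) <= _).
  apply: Rmult_le_compat_r => //. left; apply: Rinv_0_lt_compat. nra.
right. field. lra.
Qed.

Lemma mu_abs n : Rabs (mu n) <= 1.
Proof.
rewrite /mu /mobius. case: (squarefree n); last by rewrite Rabs_R0; lra.
case: (odd _); rewrite ?Rabs_Ropp Rabs_R1; lra.
Qed.

Lemma mu_sq_le1 n : 0 <= mu n ^ 2 <= 1.
Proof.
have := abs_le_inv _ _ (mu_abs n). simpl. nra.
Qed.

Definition tA (n : nat) : R := / INR n.
Definition tB (n : nat) : R := 4 / sqrt (INR n).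

Lemma tA0 n : 0 <= tA n.
Proof. rewrite /tA. case: n => [|n]; first by rewrite /= Rinv_0; lra.
left; apply: Rinv_0_lt_compat; exact: INR_pos. Qed.

Lemma tB0 n : 0 <= tB n.
Proof. rewrite /tB. case: n => [|n]; first by rewrite /= sqrt_0 /Rdiv Rinv_0; lra.
left; apply: Rdiv_lt_0_compat; [lra| apply: sqrt_lt_R0; exact: INR_pos]. Qed.

Lemma tA_lim eps : 0 < eps -> exists N, forall n, (N <= n)%N -> tA n < eps.
Proof.
move=> e0. have [N HN] := INR_unbounded (/ eps). exists N.+1 => n nN.
have n0 : (0 < n)%N by apply: leq_trans nN.
have hn : INR N < INR n by apply: lt_INR; apply/ltP.
rewrite /tA. have h := INR_pos _ n0. have ie : 0 < / eps by apply: Rinv_0_lt_compat.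
rewrite -(Rinv_inv eps). apply: Rinv_lt_contravar; nra.
Qed.

Lemma tB_lim eps : 0 < eps -> exists N, forall n, (N <= n)%N -> tB n < eps.
Proof.
move=> e0. have [N HN] := tA_lim ((eps / 4) ^ 2) ltac:(apply: pow_lt; lra).
exists (maxn N 1) => n nN. have n0 : (0 < n)%N by apply: leq_trans nN; rewrite leq_maxr.
have := HN n (leq_trans (leq_maxl _ _) nN). rewrite /tA /tB => h.
have s0 : 0 < sqrt (INR n) by apply: sqrt_lt_R0; exact: INR_pos.
have ss : sqrt (INR n) * sqrt (INR n) = INR n by apply: sqrt_sqrt; have := INR_pos _ n0; lra.
have : / sqrt (INR n) < eps / 4.
  apply: Rnot_le_lt => H. have : (eps / 4) ^ 2 <= / INR n.
    rewrite -ss Rinv_mult /=. have : 0 <= eps / 4 by lra. nra.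
  lra.
rewrite /Rdiv. lra.
Qed.

Lemma ln_over_sq n : (0 < n)%N ->
  ln (INR n) / (INR n * INR n) <= 2 / (INR n * sqrt (INR n)).
Proof.
move=> n0. have h := INR_pos _ n0.
have s0 : 0 < sqrt (INR n) by apply: sqrt_lt_R0.
have ss : sqrt (INR n) * sqrt (INR n) = INR n by apply: sqrt_sqrt; lra.
have := ln_le_2sqrt _ h. move=> hl.
have -> : 2 / (INR n * sqrt (INR n)) = 2 * sqrt (INR n) / (INR n * (sqrt (INR n) * sqrt (INR n))).
  field; lra.
rewrite ss.
apply: Rmult_le_compat_r => //. left; apply: Rinv_0_lt_compat; nra.
Qed.

Lemma inv_sq_le n : (0 < n)%N -> / (INR n * INR n) <= / (INR n * sqrt (INR n)).
Proof.
move=> n0. have h := INR_ge1 _ n0.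
have s0 : 0 < sqrt (INR n) by apply: sqrt_lt_R0; lra.
have ss : sqrt (INR n) * sqrt (INR n) = INR n by apply: sqrt_sqrt; lra.
apply: Rinv_le_contravar; first nra. apply: Rmult_le_compat_l; first lra.
have : 1 <= sqrt (INR n) by nra. nra.
Qed.

Definition aM (d : nat) : R := mu d / (INR d * INR d).
Definition aP (d : nat) : R := mu d * ln (INR d) / (INR d * INR d).
Definition aZ (n : nat) : R := / (INR n * INR n).
Definition aZ' (n : nat) : R := ln (INR n) / (INR n * INR n).

Lemma sq_pos n : (0 < n)%N -> 0 < INR n * INR n.
Proof. move=> n0. have := INR_pos _ n0. nra. Qed.

Lemma aM_bound n : (0 < n)%N -> Rabs (aM n.+1) <= tA n - tA n.+1.
Proof.
move=> n0. apply: Rle_trans (inv_sq_tele _ n0). rewrite /aM /Rdiv Rabs_mult.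
rewrite (Rabs_pos_eq (/ _)); last by left; apply: Rinv_0_lt_compat; apply: sq_pos.
have := mu_abs n.+1. have : 0 < / (INR n.+1 * INR n.+1) by apply: Rinv_0_lt_compat; apply: sq_pos.
nra.
Qed.

Lemma aZ_bound n : (0 < n)%N -> Rabs (aZ n.+1) <= tA n - tA n.+1.
Proof.
move=> n0. apply: Rle_trans (inv_sq_tele _ n0). rewrite /aZ.
rewrite (Rabs_pos_eq (/ _)); last by left; apply: Rinv_0_lt_compat; apply: sq_pos. lra.
Qed.

Lemma aZ'_bound n : (0 < n)%N -> Rabs (aZ' n.+1) <= tB n - tB n.+1.
Proof.
move=> n0. have := sqrt_tele _ n0. have := ln_over_sq n.+1 isT.
have := ln_ge0 _ (INR_ge1 n.+1 isT).
have := Rinv_0_lt_compat _ (sq_pos n.+1 isT).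
rewrite /aZ' /tB /Rdiv => h1 h2 h3 h4.
rewrite Rabs_pos_eq; last by nra. lra.
Qed.

Lemma aP_bound n : (0 < n)%N -> Rabs (aP n.+1) <= tB n - tB n.+1.
Proof.
move=> n0. apply: Rle_trans (aZ'_bound _ n0). rewrite /aP /aZ' /Rdiv.
rewrite !Rabs_mult Rmult_assoc. have := mu_abs n.+1. 
have := Rabs_pos (ln (INR n.+1) * / (INR n.+1 * INR n.+1)). rewrite Rabs_mult. nra.
Qed.

Definition limM := proj1_sig (tele_lim aM tA tA0 aM_bound tA_lim).
Definition limP := proj1_sig (tele_lim aP tB tB0 aP_bound tB_lim).
Definition limZ := proj1_sig (tele_lim aZ tA tA0 aZ_bound tA_lim).
Definition limZ' := proj1_sig (tele_lim aZ' tB tB0 aZ'_bound tB_lim).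

Lemma limM_spec : Un_cv (sum_1_to aM) limM /\ forall K, (0 < K)%N -> Rabs (limM - sum_1_to aM K) <= tA K.
Proof. exact: proj2_sig (tele_lim aM tA tA0 aM_bound tA_lim). Qed.
Lemma limP_spec : Un_cv (sum_1_to aP) limP /\ forall K, (0 < K)%N -> Rabs (limP - sum_1_to aP K) <= tB K.
Proof. exact: proj2_sig (tele_lim aP tB tB0 aP_bound tB_lim). Qed.
Lemma limZ_spec : Un_cv (sum_1_to aZ) limZ /\ forall K, (0 < K)%N -> Rabs (limZ - sum_1_to aZ K) <= tA K.
Proof. exact: proj2_sig (tele_lim aZ tA tA0 aZ_bound tA_lim). Qed.
Lemma limZ'_spec : Un_cv (sum_1_to aZ') limZ' /\ forall K, (0 < K)%N -> Rabs (limZ' - sum_1_to aZ' K) <= tB K.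
Proof. exact: proj2_sig (tele_lim aZ' tB tB0 aZ'_bound tB_lim). Qed.

Definition dconv (a b : nat -> R) (n : nat) : R :=
  sum_1_to (fun d => if d %| n then a d * b (n %/ d) else 0) n.

Lemma dir_finite a b N :
  sum_1_to (dconv a b) N = sum_1_to (fun d => a d * sum_1_to b (N %/ d)) N.
Proof.
rewrite (sum_ext _ (fun n => sum_1_to (fun d => if d %| n then a d * b (n %/ d) else 0) N)); last first.
  move=> n /andP [n0 nN]. rewrite /dconv. symmetry. apply: sum_stop => // d /andP [nd _].
  case E : (d %| n) => //. by have := dvdn_leq n0 E; rewrite leqNgt nd.
rewrite (sum_swap (fun n d => if d %| n then a d * b (n %/ d) else 0)).
apply: sum_ext => d /andP [d0 _].
rewrite (sum_rdx d (fun n => a d * b (n %/ d))) // sum_scal.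
congr (_ * _). apply: sum_ext => k _. by rewrite mulKn.
Qed.

Lemma dir_bound a b ta tb A B :
  (forall n, 0 <= ta n) -> (forall n, (0 < n)%N -> Rabs (a n.+1) <= ta n - ta n.+1) ->
  (forall n, 0 <= tb n) -> (forall n, (0 < n)%N -> Rabs (b n.+1) <= tb n - tb n.+1) ->
  (forall K, (0 < K)%N -> Rabs (A - sum_1_to a K) <= ta K) ->
  (forall K, (0 < K)%N -> Rabs (B - sum_1_to b K) <= tb K) ->
  exists C, forall K, (0 < K)%N ->
    Rabs (A * B - sum_1_to (dconv a b) (K * K)) <= C * (ta K + tb K).
Proof.
move=> ta0 hat tb0 hbt hA hB.
set Ta := Rabs (a 1%N) + ta 1%N. set Tb := Rabs (b 1%N) + tb 1%N.
have Tbb : forall X, Rabs (sum_1_to b X) <= Tb.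
  move=> X. apply: Rle_trans (sum_abs _ _) _. exact: (total_bound b tb tb0 hbt).
have Taa : forall X, sum_1_to (abs_seq a) X <= Ta by move=> X; exact: (total_bound a ta ta0 hat).
have Ta0 : 0 <= Ta by rewrite /Ta; have := Rabs_pos (a 1%N); have := ta0 1%N; lra.
have Tb0 : 0 <= Tb by rewrite /Tb; have := Rabs_pos (b 1%N); have := tb0 1%N; lra.
exists (Ta + Rabs A + 3 * Tb) => K K0.
set N := (K * K)%N.
have KN : (K <= N)%N by rewrite /N leq_pmulr.
have N0 : (0 < N)%N by apply: leq_trans KN.
rewrite dir_finite.
have e1 : Rabs (A * B - sum_1_to a N * sum_1_to b N) <= Rabs A * tb K + Tb * ta K.
  have -> : A * B - sum_1_to a N * sum_1_to b N =
            A * (B - sum_1_to b N) + sum_1_to b N * (A - sum_1_to a N) by ring.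
  apply: Rle_trans (Rabs_triang _ _) _. rewrite !Rabs_mult.
  have h1 := hB N N0. have h2 := hA N N0.
  have h3 := t_decr b tb hbt K N K0 KN. have h4 := t_decr a ta hat K N K0 KN.
  have := Tbb N. have := Rabs_pos A. have := Rabs_pos (A - sum_1_to a N).
  have := Rabs_pos (B - sum_1_to b N). have := Rabs_pos (sum_1_to b N). nra.
have e2 : Rabs (sum_1_to a N * sum_1_to b N - sum_1_to (fun d => a d * sum_1_to b (N %/ d)) N)
          <= Ta * tb K + 2 * Tb * ta K.
  rewrite Rmult_comm -sum_scal -sum_sub.
  rewrite (sum_ext _ (fun d => a d * (sum_1_to b N - sum_1_to b (N %/ d)))); last first.
    move=> d _; ring.
  rewrite -(subnKC KN) sum_split (subnKC KN).
  apply: Rle_trans (Rabs_triang _ _) _.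
  apply: Rplus_le_compat.
  - apply: Rle_trans (sum_abs _ _) _.
    apply: Rle_trans (_ : sum_1_to (fun d => Rabs (a d) * tb K) K <= _).
      apply: sum_le_le => d /andP [d0 dK]. rewrite Rabs_mult.
      apply: Rmult_le_compat_l; first exact: Rabs_pos.
      apply: (tail_bound b tb tb0 hbt K (N %/ d) N K0).
      + by rewrite leq_divRL // /N leq_mul2l dK orbT.
      + exact: leq_div.
    rewrite (sum_ext _ (fun d => tb K * abs_seq a d)); last by move=> d _; rewrite /abs_seq; ring.
    rewrite sum_scal. have := Taa K. have := tb0 K. nra.
  - apply: Rle_trans (sum_abs _ _) _.
    apply: Rle_trans (_ : sum_1_to (fun j => 2 * Tb * abs_seq a (K + j)%N) (N - K) <= _).
      apply: sum_le_le => j _. rewrite Rabs_mult /abs_seq.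
      have : Rabs (sum_1_to b N - sum_1_to b (N %/ (K + j))) <= 2 * Tb.
        apply: Rle_trans (Rabs_triang _ _) _. rewrite Rabs_Ropp.
        have := Tbb N. have := Tbb (N %/ (K + j)). lra.
      have := Rabs_pos (a (K + j)%N). nra.
    rewrite sum_scal. have := tele_abs a ta hat K (N - K) K0.
    rewrite sum_split. have := ta0 (K + (N - K))%N. have : 0 <= 2 * Tb by lra. nra.
have := Rabs_triang (A * B - sum_1_to a N * sum_1_to b N)
  (sum_1_to a N * sum_1_to b N - sum_1_to (fun d => a d * sum_1_to b (N %/ d)) N).
have -> : A * B - sum_1_to a N * sum_1_to b N +
   (sum_1_to a N * sum_1_to b N - sum_1_to (fun d => a d * sum_1_to b (N %/ d)) N) =
   A * B - sum_1_to (fun d => a d * sum_1_to b (N %/ d)) N by ring.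
have := ta0 K. have := tb0 K. have := Rabs_pos A. nra.
Qed.

Lemma INR_muln m n : INR (m * n)%N = INR m * INR n.
Proof. exact: mult_INR. Qed.

Lemma INR_divn d n : d %| n -> INR (n %/ d) * INR d = INR n.
Proof. move=> h. by rewrite -INR_muln divnK. Qed.

Lemma zero_of_bound x C f : (forall K, 0 <= f K) ->
  (forall eps, 0 < eps -> exists N, forall n, (N <= n)%N -> f n < eps) ->
  (forall K, (0 < K)%N -> Rabs x <= C * f K) -> x = 0.
Proof.
move=> f0 fl H. apply: NNPP => xn0. have ax : 0 < Rabs x by apply: Rabs_pos_lt.
have C0 : 0 <= Rabs C by exact: Rabs_pos.
have [N HN] := fl (Rabs x / (Rabs C + 1)) ltac:(apply: Rdiv_lt_0_compat; lra).
have := HN (maxn N 1) (leq_maxl _ _). have := H (maxn N 1) ltac:(by rewrite leq_max orbT).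
have := f0 (maxn N 1). have := Rle_abs C. set y := f (maxn N 1).
move=> h1 h2 h3 h4.
have : Rabs x <= Rabs C * y by nra.
have : Rabs x / (Rabs C + 1) * (Rabs C + 1) = Rabs x by field; lra.
nra.
Qed.

Lemma dconv_MZ n : (0 < n)%N -> dconv aM aZ n = if n == 1%N then 1 else 0.
Proof.
move=> n0. rewrite /dconv.
have hn := sq_pos n n0.
rewrite (sum_ext _ (fun d => / (INR n * INR n) * (if d %| n then mu d else 0))); last first.
  move=> d /andP [d0 _]. case E : (d %| n); last by ring.
  rewrite /aM /aZ -(INR_divn d n E).
  have q0 : (0 < n %/ d)%N by rewrite divn_gt0 // dvdn_leq.
  have := INR_pos _ d0. have := INR_pos _ q0. move=> h1 h2. field. lra.
rewrite sum_scal mobius_sum //. case: eqP => [->|_]; last by ring.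
rewrite /=. field.
Qed.

Lemma dconv_MZ'_PZ n : (0 < n)%N -> dconv aM aZ' n + dconv aP aZ n = 0.
Proof.
move=> n0. rewrite /dconv -sum_add.
have hn := sq_pos n n0.
rewrite (sum_ext _ (fun d => ln (INR n) / (INR n * INR n) * (if d %| n then mu d else 0))); last first.
  move=> d /andP [d0 _]. case E : (d %| n); last by ring.
  rewrite /aM /aZ /aZ' /aP -(INR_divn d n E).
  have q0 : (0 < n %/ d)%N by rewrite divn_gt0 // dvdn_leq.
  have := INR_pos _ d0. have := INR_pos _ q0. move=> h1 h2. rewrite ln_mult //. field. lra.
rewrite sum_scal mobius_sum //. case: eqP => [->|_]; last by ring.
rewrite /= ln_1. field.
Qed.

Lemma sum_MZ N : (0 < N)%N -> sum_1_to (dconv aM aZ) N = 1.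
Proof.
elim: N => [//|N IH] _. rewrite sum_S (dconv_MZ N.+1 isT).
case: N IH => [|N] IH.
- rewrite sum_O /=. lra.
- rewrite IH //. have -> : (N.+2 == 1%N) = false by []. lra.
Qed.

Lemma MZ_one : limM * limZ = 1.
Proof.
have [C HC] := dir_bound aM aZ tA tA limM limZ tA0 aM_bound tA0 aZ_bound
  (proj2 limM_spec) (proj2 limZ_spec).
have : limM * limZ - 1 = 0.
  apply: (zero_of_bound _ C (fun K => tA K + tA K)).
  - move=> K; have := tA0 K; lra.
  - move=> eps e0. have [N HN] := tA_lim (eps / 2) ltac:(lra). exists N => n nN.
    have := HN n nN. lra.
  - move=> K K0. have := HC K K0.
    by rewrite sum_MZ // muln_gt0 K0.
lra.
Qed.

Lemma MZ'_PZ : limM * limZ' + limP * limZ = 0.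
Proof.
have [C1 HC1] := dir_bound aM aZ' tA tB limM limZ' tA0 aM_bound tB0 aZ'_bound
  (proj2 limM_spec) (proj2 limZ'_spec).
have [C2 HC2] := dir_bound aP aZ tB tA limP limZ tB0 aP_bound tA0 aZ_bound
  (proj2 limP_spec) (proj2 limZ_spec).
apply: (zero_of_bound _ (C1 + C2) (fun K => tA K + tB K)).
- move=> K; have := tA0 K; have := tB0 K; lra.
- move=> eps e0. have [N1 HN1] := tA_lim (eps / 2) ltac:(lra).
  have [N2 HN2] := tB_lim (eps / 2) ltac:(lra). exists (maxn N1 N2) => n nN.
  have := HN1 n (leq_trans (leq_maxl _ _) nN). have := HN2 n (leq_trans (leq_maxr _ _) nN). lra.
- move=> K K0. have := HC1 K K0. have := HC2 K K0.
  have : sum_1_to (dconv aM aZ') (K * K) + sum_1_to (dconv aP aZ) (K * K) = 0.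
    rewrite -sum_add (sum_ext _ (fun _ => 0)) ?sum_0 //.
    move=> k /andP [k0 _]. exact: dconv_MZ'_PZ.
  move=> E h2 h1.
  have := Rabs_triang (limM * limZ' - sum_1_to (dconv aM aZ') (K * K))
                      (limP * limZ - sum_1_to (dconv aP aZ) (K * K)).
  have -> : limM * limZ' - sum_1_to (dconv aM aZ') (K * K) +
     (limP * limZ - sum_1_to (dconv aP aZ) (K * K)) = limM * limZ' + limP * limZ by lra.
  lra.
Qed.

Lemma sum_f_shift f N : sum_f_R0 (fun n => f n.+1) N = sum_1_to f N.+1.
Proof. elim: N => [|N IH] /=; first by rewrite /=; ring. by rewrite IH. Qed.

Lemma Rpower2 x : 0 < x -> Rpower x 2 = x * x.
Proof. move=> x0. rewrite (_ : 2 = INR 2); last by rewrite /=; ring. rewrite Rpower_pow //=. ring. Qed.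

Lemma zeta2_eq : zeta 2 = limZ.
Proof.
have h : infinite_sum (fun n => / Rpower (INR n.+1) 2) limZ.
  have cv := proj1 limZ_spec.
  move=> eps e0. have [N HN] := cv eps e0. exists N => n nN.
  have -> : sum_f_R0 (fun n => / Rpower (INR n.+1) 2) n = sum_1_to aZ n.+1.
    rewrite -sum_f_shift. apply PartSum.sum_eq; intros k _. rewrite /aZ Rpower2 //. exact: INR_pos.
  apply: HN. lia.
have E : exists l, infinite_sum (fun n => / Rpower (INR n.+1) 2) l by exists limZ.
have := epsilon_spec (inhabits 0) _ E. rewrite -/(zeta 2) => h2.
exact: uniqueness_sum h2 h.
Qed.

Lemma R4_ge1 x : 1 <= x -> 1 <= Rpower x (/ 4).
Proof. move=> x1. rewrite -(Rpower_O x); last lra. apply: Rle_Rpower => //. lra. Qed.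

Lemma Rpow_ge x s : 1 <= x -> 7/4 <= s -> x * sqrt x * Rpower x (/ 4) <= Rpower x s.
Proof.
move=> x1 s1.
have e : Rpower x (1 + (/2 + /4)) = x * sqrt x * Rpower x (/4).
  rewrite !Rpower_plus Rpower_1 ?Rpower_sqrt; try lra.
rewrite -e. apply: Rle_Rpower => //. lra.
Qed.

Lemma ln_R4 x : 1 <= x -> ln x <= 4 * Rpower x (/ 4).
Proof.
move=> x1. have : ln x = 4 * ln (Rpower x (/ 4)) by rewrite /Rpower ln_exp; field.
move=> ->. have := ln_le_sub1 (Rpower x (/ 4)) ltac:(have := R4_ge1 x x1; lra). lra.
Qed.

Lemma term_bound1 n s : (0 < n)%N -> 7/4 <= s ->
  / Rpower (INR n) s <= / (INR n * sqrt (INR n)).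
Proof.
move=> n0 s1. have h := INR_ge1 _ n0. have sq := sqrt_lt_R0 (INR n) ltac:(lra).
have r4 := R4_ge1 _ h. have := Rpow_ge _ _ h s1. move=> hr.
have p : 0 < INR n * sqrt (INR n) by nra.
have : INR n * sqrt (INR n) * 1 <= INR n * sqrt (INR n) * Rpower (INR n) (/ 4).
  apply: Rmult_le_compat_l; lra.
move=> h2. apply: Rinv_le_contravar; lra.
Qed.

Lemma term_bound2 n s : (0 < n)%N -> 7/4 <= s ->
  ln (INR n) / Rpower (INR n) s <= 4 / (INR n * sqrt (INR n)).
Proof.
move=> n0 s1. have h := INR_ge1 _ n0. have sq := sqrt_lt_R0 (INR n) ltac:(lra).
have r4 := R4_ge1 _ h. have := Rpow_ge _ _ h s1. move=> hr.
have l4 := ln_R4 _ h. have ln0 := ln_ge0 _ h.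
have hp0 : 0 < INR n * sqrt (INR n) by nra.
have hp : 0 < INR n * sqrt (INR n) * Rpower (INR n) (/ 4) by apply: Rmult_lt_0_compat; lra.
apply: Rle_trans (_ : 4 * Rpower (INR n) (/ 4) / (INR n * sqrt (INR n) * Rpower (INR n) (/ 4)) <= _).
- rewrite /Rdiv. apply: Rmult_le_compat => //.
  + left; apply: Rinv_0_lt_compat; lra.
  + apply: Rinv_le_contravar => //.
- right. field. split; nra.
Qed.

Definition tC (n : nat) : R := 8 / sqrt (INR n).

Lemma tC0 n : 0 <= tC n.
Proof. have := tB0 n. rewrite /tC /tB /Rdiv. nra. Qed.

Lemma tC_lim eps : 0 < eps -> exists N, forall n, (N <= n)%N -> tC n < eps.
Proof.
move=> e0. have [N HN] := tB_lim (eps / 2) ltac:(lra). exists N => n nN.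
have := HN n nN. rewrite /tC /tB /Rdiv. lra.
Qed.

Lemma tC_step n : (0 < n)%N -> 4 / (INR n.+1 * sqrt (INR n.+1)) <= tC n - tC n.+1.
Proof. move=> n0. have := sqrt_tele n n0. rewrite /tC /Rdiv. lra. Qed.

Definition Ssum (N : nat) : R := sum_1_to (fun n => mu n ^ 2 / INR n) N.

Lemma S_rearr N : Ssum N = sum_1_to (fun d => aM d * Hs (N %/ (d * d))) N.
Proof.
rewrite /Ssum.
rewrite (sum_ext _ (fun n => sum_1_to (fun d => if d * d %| n then mu d / INR n else 0) N)); last first.
  move=> n /andP [n0 nN]. rewrite -sq_sum // /Rdiv -(Rmult_comm (/ INR n)) -sum_scal.
  symmetry. rewrite (sum_stop _ n N) //; last first.
    move=> d /andP [nd _]. case E : (d * d %| n) => //.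
    have := dvdn_leq n0 E. case: d nd E => // d nd E h.
    have : (d.+1 <= d.+1 * d.+1)%N by rewrite leq_pmulr.
    move=> h'. have := leq_trans h' h. by rewrite leqNgt nd.
  apply: sum_ext => d _. case: (d * d %| n); ring.
rewrite (sum_swap (fun n d => if d * d %| n then mu d / INR n else 0)).
apply: sum_ext => d /andP [d0 _].
have dd0 : (0 < d * d)%N by rewrite muln_gt0 d0.
rewrite (sum_rdx (d * d) (fun n => mu d / INR n)) //.
rewrite /aM /Hs -sum_scal. apply: sum_ext => k /andP [k0 _].
rewrite INR_muln INR_muln. have := INR_pos _ d0. have := INR_pos _ k0. move=> h1 h2. field. lra.
Qed.

Lemma S_rearr_sq K : Ssum (K * K) = sum_1_to (fun d => aM d * Hs ((K * K) %/ (d * d))) K.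
Proof.
rewrite S_rearr. apply: sum_stop; first by case: K => // K; rewrite leq_pmulr.
move=> d /andP [Kd _]. rewrite divn_small ?sum_O /Hs //=; first ring.
by apply: ltn_mul.
Qed.

Lemma term_est K d : (0 < d)%N -> (d <= K)%N ->
  Rabs (Hs ((K * K) %/ (d * d)) - (2 * ln (INR K) - 2 * ln (INR d)) - euler_gamma)
  <= 2 * (INR d * INR d) / (INR K * INR K).
Proof.
move=> d0 dK. have K0 : (0 < K)%N by apply: leq_trans dK.
set q := (d * d)%N. set m := (K * K)%N. set k := (m %/ q)%N.
have q0 : (0 < q)%N by rewrite muln_gt0 d0.
have k0 : (0 < k)%N by rewrite divn_gt0 // leq_mul.
have hk1 : INR k * INR q <= INR m.
  rewrite -INR_muln. apply: le_INR. apply/leP. exact: leq_divM.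
have hk2 : INR m < (INR k + 1) * INR q.
  rewrite -INR_Sn -INR_muln. apply: lt_INR. apply/ltP. exact: ltn_ceil.
have hq := INR_pos _ q0. have hkp := INR_pos _ k0.
set y := INR m / INR q.
have y1 : INR k <= y by rewrite /y; apply: (Rmult_le_reg_r (INR q)) => //; field_simplify; lra.
have y2 : y < INR k + 1 by rewrite /y; apply: (Rmult_lt_reg_r (INR q)) => //; field_simplify; lra.
have := gamma_bound k y k0 y1 y2.
have -> : ln y = 2 * ln (INR K) - 2 * ln (INR d).
  have hK := INR_pos _ K0. have hd := INR_pos _ d0.
  rewrite /y /m /q !INR_muln /Rdiv ln_mult; [|nra|apply: Rinv_0_lt_compat; nra].
  rewrite ln_Rinv; last nra. rewrite !ln_mult //. ring.
move=> h. apply: Rle_trans h _.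
have -> : 2 * (INR d * INR d) / (INR K * INR K) = 2 / y.
  rewrite /y /m /q !INR_muln. field. have := INR_pos _ K0. have := INR_pos _ d0. nra.
have yp : 0 < y by lra.
case: (Rle_lt_dec y 2) => hy.
- apply: Rle_trans (_ : 1 <= _).
  + rewrite -Rinv_1. apply: Rinv_le_contravar; first lra. exact: INR_ge1.
  + apply: (Rmult_le_reg_r y) => //. rewrite /Rdiv Rmult_assoc Rinv_l; lra.
- have -> : 2 / y = / (y / 2) by field; lra.
  apply: Rinv_le_contravar; lra.
Qed.

Definition Lc : R := euler_gamma * limM - 2 * limP.

Lemma S_asym K : (0 < K)%N ->
  Rabs (Ssum (K * K) - limM * (2 * ln (INR K)) - Lc) <= 3 * tB K + (Rabs euler_gamma + 2) * tA K.
Proof.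
move=> K0. have hK := INR_pos _ K0.
set e := fun d => Hs ((K * K) %/ (d * d)) - (2 * ln (INR K) - 2 * ln (INR d)) - euler_gamma.
have dec : Ssum (K * K) = (2 * ln (INR K) + euler_gamma) * sum_1_to aM K - 2 * sum_1_to aP K
    + sum_1_to (fun d => aM d * e d) K.
  rewrite S_rearr_sq -!sum_scal -sum_sub -sum_add. apply: sum_ext => d _.
  rewrite /e /aM /aP. rewrite /Rdiv. ring_simplify. reflexivity.
have hE : Rabs (sum_1_to (fun d => aM d * e d) K) <= 2 * tA K.
  apply: Rle_trans (sum_abs _ _) _.
  apply: Rle_trans (_ : sum_1_to (fun _ => 2 / (INR K * INR K)) K <= _).
    apply: sum_le_le => d /andP [d0 dK]. rewrite Rabs_mult.
    have hd := sq_pos _ d0. have := term_est K d d0 dK. rewrite -/(e d) => h.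
    have ha : Rabs (aM d) <= / (INR d * INR d).
      rewrite /aM /Rdiv Rabs_mult (Rabs_pos_eq (/ _)); last by left; apply: Rinv_0_lt_compat.
      have := mu_abs d. have : 0 < / (INR d * INR d) by apply: Rinv_0_lt_compat. nra.
    apply: Rle_trans (_ : / (INR d * INR d) * (2 * (INR d * INR d) / (INR K * INR K)) <= _).
      apply: Rmult_le_compat => //; exact: Rabs_pos.
    right. field. split; nra.
  rewrite sum_const /tA. right. field. lra.
have hM := proj2 limM_spec K K0. have hP := proj2 limP_spec K K0.
have lnK := ln_ge0 _ (INR_ge1 _ K0).
have l2 : 2 * ln (INR K) * tA K <= tB K.
  rewrite /tA /tB. have := ln_le_2sqrt _ hK.
  have s0 : 0 < sqrt (INR K) by apply: sqrt_lt_R0.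
  have ss : sqrt (INR K) * sqrt (INR K) = INR K by apply: sqrt_sqrt; lra.
  have -> : 4 / sqrt (INR K) = 4 * sqrt (INR K) * / (sqrt (INR K) * sqrt (INR K)) by field; lra.
  rewrite ss.
  have : 0 < / INR K by apply: Rinv_0_lt_compat. nra.
rewrite dec /Lc.
have -> : (2 * ln (INR K) + euler_gamma) * sum_1_to aM K - 2 * sum_1_to aP K +
   sum_1_to (fun d => aM d * e d) K - limM * (2 * ln (INR K)) - (euler_gamma * limM - 2 * limP)
   = - ((2 * ln (INR K) + euler_gamma) * (limM - sum_1_to aM K)) + 2 * (limP - sum_1_to aP K)
     + sum_1_to (fun d => aM d * e d) K by ring.
apply: Rle_trans (Rabs_triang _ _) _. 
have h1 := Rabs_triang (- ((2 * ln (INR K) + euler_gamma) * (limM - sum_1_to aM K))) (2 * (limP - sum_1_to aP K)).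
rewrite Rabs_Ropp !Rabs_mult (Rabs_pos_eq 2) in h1; last lra.
have : Rabs (2 * ln (INR K) + euler_gamma) <= 2 * ln (INR K) + Rabs euler_gamma.
  apply: Rle_trans (Rabs_triang _ _) _. rewrite Rabs_pos_eq; lra.
have := Rabs_pos (limM - sum_1_to aM K). have := tA0 K. have := Rabs_pos euler_gamma.
nra.
Qed.

Lemma dterm a s : 0 < a -> derivable_pt_lim (fun s => / Rpower a s) s (- ln a / Rpower a s).
Proof.
move=> a0.
have E : (fun s => / Rpower a s) = comp exp (mult_real_fct (- ln a) id).
  apply: functional_extensionality => t. rewrite /comp /mult_real_fct /id /Rpower -exp_Ropp.
  f_equal; ring.
rewrite E.
have := derivable_pt_lim_comp (mult_real_fct (- ln a) id) exp s _ _
  (derivable_pt_lim_scal id (- ln a) s 1 (derivable_pt_lim_id s)) (derivable_pt_lim_exp _).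
have -> : exp (mult_real_fct (- ln a) id s) * (- ln a * 1) = - ln a / Rpower a s.
  rewrite /mult_real_fct /id /Rpower /Rdiv -exp_Ropp. rewrite (_ : - (s * ln a) = - ln a * s); [ring|ring].
done.
Qed.

Lemma cv_shift_down u l : Un_cv u l -> Un_cv (fun n => u n.+1) l.
Proof. move=> cv eps e0. have [N HN] := cv eps e0. exists N => n nN. apply: HN. lia. Qed.

Definition fn (N : nat) (s : R) := sum_f_R0 (fun n => / Rpower (INR n.+1) s) N.
Definition fn' (N : nat) (s : R) := sum_f_R0 (fun n => - ln (INR n.+1) / Rpower (INR n.+1) s) N.
Definition bs (s : R) (n : nat) := / Rpower (INR n) s.
Definition as_ (s : R) (n : nat) := - ln (INR n) / Rpower (INR n) s.

Lemma fn_eq N s : fn N s = sum_1_to (bs s) N.+1.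
Proof. by rewrite /fn -sum_f_shift. Qed.
Lemma fn'_eq N s : fn' N s = sum_1_to (as_ s) N.+1.
Proof. by rewrite /fn' -sum_f_shift. Qed.

Lemma Rpower_pos a s : 0 < Rpower a s.
Proof. exact: exp_pos. Qed.

Lemma bs_bound s : 7/4 <= s -> forall n, (0 < n)%N -> Rabs (bs s n.+1) <= tC n - tC n.+1.
Proof.
move=> s1 n n0. apply: Rle_trans (tC_step n n0).
rewrite /bs Rabs_pos_eq; last by left; apply: Rinv_0_lt_compat; exact: Rpower_pos.
apply: Rle_trans (term_bound1 n.+1 s isT s1) _.
have : 0 < / (INR n.+1 * sqrt (INR n.+1)).
  apply: Rinv_0_lt_compat. apply: Rmult_lt_0_compat; first exact: INR_pos.
  apply: sqrt_lt_R0; exact: INR_pos.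
rewrite /Rdiv. lra.
Qed.

Lemma as_bound s : 7/4 <= s -> forall n, (0 < n)%N -> Rabs (as_ s n.+1) <= tC n - tC n.+1.
Proof.
move=> s1 n n0. apply: Rle_trans (tC_step n n0).
rewrite /as_ /Rdiv Ropp_mult_distr_l_reverse Rabs_Ropp Rabs_pos_eq.
- exact: term_bound2 n.+1 s isT s1.
- apply: Rmult_le_pos; first exact: ln_ge0 (INR_ge1 n.+1 isT).
  left; apply: Rinv_0_lt_compat; exact: Rpower_pos.
Qed.

Definition rad : posreal := mkposreal (/ 4) ltac:(lra).

Lemma ball_s s : Boule 2 rad s -> 7/4 <= s.
Proof. rewrite /Boule /= => h. have := abs_le_inv _ _ (Rlt_le _ _ h). lra. Qed.

Definition g' (s : R) := epsilon (inhabits 0) (fun l => Un_cv (fun N => fn' N s) l).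

Lemma g'_spec s : 7/4 <= s -> Un_cv (fun N => fn' N s) (g' s) /\
  forall N, Rabs (g' s - fn' N s) <= tC N.+1.
Proof.
move=> s1. set T := tele_lim (as_ s) tC tC0 (as_bound s s1) tC_lim.
have [cvl bl] := proj2_sig T. set l0 := proj1_sig T in cvl bl.
have cv : Un_cv (fun N => fn' N s) l0.
  have := cv_shift_down _ _ cvl. move=> h eps e0. have [N HN] := h eps e0. exists N => n nN.
  rewrite fn'_eq. exact: HN.
have E : exists l, Un_cv (fun N => fn' N s) l by exists l0.
have := epsilon_spec (inhabits 0) _ E. rewrite -/(g' s) => h.
have eq := UL_sequence _ _ _ h cv. rewrite eq. split => // N.
rewrite fn'_eq. exact: bl.
Qed.

Lemma zeta_cv s : 7/4 <= s -> Un_cv (fun N => fn N s) (zeta s).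
Proof.
move=> s1. set T := tele_lim (bs s) tC tC0 (bs_bound s s1) tC_lim.
have [cvl bl] := proj2_sig T. set l0 := proj1_sig T in cvl bl.
have cv : Un_cv (fun N => fn N s) l0.
  have := cv_shift_down _ _ cvl. move=> h eps e0. have [N HN] := h eps e0. exists N => n nN.
  rewrite fn_eq. exact: HN.
have E : exists l, infinite_sum (fun n => / Rpower (INR n.+1) s) l by exists l0; exact: cv.
have := epsilon_spec (inhabits 0) _ E. rewrite -/(zeta s) => h.
have eq := UL_sequence (fun N => fn N s) _ _ h cv. by rewrite eq.
Qed.

Lemma fn_deriv N s : derivable_pt_lim (fn N) s (fn' N s).
Proof.
elim: N => [|N IH].
- exact: dterm (INR_pos 1 isT).
- exact: (derivable_pt_lim_plus _ _ s _ _ IH (dterm (INR N.+2) s (INR_pos N.+2 isT))).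
Qed.

Lemma zeta_deriv : derivable_pt_lim zeta 2 (g' 2).
Proof.
apply: (CVU_derivable fn fn' zeta g' 2 rad).
- move=> eps e0. have [N HN] := tC_lim eps e0. exists N => n y nN hy.
  have := proj2 (g'_spec y (ball_s y hy)) n. have := HN n.+1 ltac:(apply: leqW; apply/leP; exact: nN).
  lra.
- move=> x hx. exact: zeta_cv (ball_s x hx).
- move=> n x _. exact: fn_deriv.
- rewrite /Boule /= Rminus_diag Rabs_R0. lra.
Qed.

Lemma zeta'2_eq : zeta'2 = - limZ'.
Proof.
have E : exists l, derivable_pt_lim zeta 2 l by exists (g' 2); exact: zeta_deriv.
have := epsilon_spec (inhabits 0) _ E. rewrite -/zeta'2 => h.
rewrite (uniqueness_limite _ _ _ _ h zeta_deriv).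
have cv : Un_cv (fun N => fn' N 2) (- limZ').
  have := cv_shift_down _ _ (proj1 limZ'_spec). move=> h1 eps e0. have [N HN] := h1 eps e0.
  exists N => n nN. rewrite fn'_eq.
  have -> : sum_1_to (as_ 2) n.+1 = - sum_1_to aZ' n.+1.
    rewrite -sum_opp. apply: sum_ext => k /andP [k0 _]. rewrite /as_ /aZ' Rpower2; last exact: INR_pos.
    rewrite /Rdiv; ring.
  have := HN n nN. rewrite /R_dist /Rdist. 
  have -> : - sum_1_to aZ' n.+1 - - limZ' = - (sum_1_to aZ' n.+1 - limZ') by ring.
  by rewrite Rabs_Ropp.
exact: UL_sequence (proj1 (g'_spec 2 ltac:(lra))) cv.
Qed.

From Coquelicot Require Import Coquelicot.

Lemma nat_floor_eq n t : INR n <= t -> t < INR n + 1 -> nat_floor t = n.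
Proof.
move=> h1 h2. rewrite /nat_floor.
have -> : Int_part t = Z.of_nat n.
  symmetry. apply: Int_part_spec. rewrite -INR_IZR_INZ. lra.
exact: Nat2Z.id.
Qed.

Definition Qn (N : nat) : R := sum_1_to (fun n => mu n ^ 2) N.

Section Abel.
Variable c : R.
Hypothesis hyp : forall z : R, 1 <= z ->
  Rabs (sum_le (fun n => (IZR (mobius n))^2) z - c * z) <= 68/100 * sqrt z.

Definition Sz (z : R) := sum_le (fun n => (IZR (mobius n))^2 / INR n) z.
Definition Qz (z : R) := sum_le (fun n => (IZR (mobius n))^2) z.
Definition Iz (t : R) := Sz t - Qz t / t - c * ln t.
Definition Jn (n : nat) (t : R) := Ssum n - Qn n / t - c * ln t.
Definition hf (t : R) := - (136/100) / sqrt t.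

Lemma Qz_eq n t : INR n <= t -> t < INR n + 1 -> Qz t = Qn n.
Proof. move=> h1 h2. by rewrite /Qz /sum_le (nat_floor_eq n t h1 h2). Qed.
Lemma Sz_eq n t : INR n <= t -> t < INR n + 1 -> Sz t = Ssum n.
Proof. move=> h1 h2. by rewrite /Sz /sum_le (nat_floor_eq n t h1 h2). Qed.

Lemma I_eq_J n t : (0 < n)%N -> INR n <= t -> t <= INR n + 1 -> Iz t = Jn n t.
Proof.
move=> n0 h1 h2. case: (Rle_lt_or_eq_dec _ _ h2) => h.
- by rewrite /Iz /Jn (Qz_eq n t) // (Sz_eq n t).
- have e1 : INR n.+1 <= t by rewrite INR_Sn; lra.
  have e2 : t < INR n.+1 + 1 by rewrite INR_Sn; lra.
  rewrite /Iz /Jn (Qz_eq n.+1 t) // (Sz_eq n.+1 t) // /Qn /Ssum !sum_S -/(Qn n) -/(Ssum n).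
  rewrite h -INR_Sn. field. have := INR_pos n.+1 isT. lra.
Qed.

Lemma Jderiv n t : 0 < t -> derivable_pt_lim (Jn n) t (Qn n / (t * t) - c / t).
Proof.
move=> t0. apply is_derive_Reals. rewrite /Jn. auto_derive; first by repeat split; lra.
field. lra.
Qed.

Lemma hderiv t : 0 < t -> derivable_pt_lim hf t (68/100 / (t * sqrt t)).
Proof.
move=> t0. have s0 := sqrt_lt_R0 t t0. have ss := sqrt_sqrt t (Rlt_le _ _ t0).
apply is_derive_Reals. rewrite /hf. auto_derive; first by repeat split; lra.
have -> : 68/100 / (t * sqrt t) = 68/100 / (sqrt t * sqrt t * sqrt t) by rewrite ss.
field. lra.
Qed.

Lemma piece n a b : (0 < n)%N -> INR n <= a -> a <= b -> b <= INR n + 1 ->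
  Rabs (Jn n b - Jn n a) <= hf b - hf a.
Proof.
move=> n0 na ab bn. have hn := INR_ge1 _ n0.
case: (Rle_lt_or_eq_dec _ _ ab) => lab; last by rewrite lab !Rminus_diag Rabs_R0; lra.
have der_ok : forall x, INR n < x < INR n + 1 ->
    Rabs (Qn n / (x * x) - c / x) <= 68/100 / (x * sqrt x).
  move=> x [x1 x2]. have x0 : 0 < x by lra.
  have := hyp x ltac:(lra). rewrite -/(Qz x) (Qz_eq n x); [move=> H|lra|lra].
  have -> : Qn n / (x * x) - c / x = (Qn n - c * x) / (x * x) by field; lra.
  have s0 := sqrt_lt_R0 x x0. have ss := sqrt_sqrt x (Rlt_le _ _ x0).
  rewrite /Rdiv Rabs_mult (Rabs_pos_eq (/ (x * x))); last by left; apply: Rinv_0_lt_compat; nra.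
  have -> : 68 / 100 * / (x * sqrt x) = 68 / 100 * sqrt x * / (x * x).
    have gen : forall y, 0 < y -> 68/100 * / (y*y*y) = 68/100 * y * / ((y*y)*(y*y)) by move=> y y0; field; lra.
    by have := gen (sqrt x) s0; rewrite ss.
  apply: Rmult_le_compat_r => //. left; apply: Rinv_0_lt_compat; nra.
have [x1 [E1 [xa xb]]] := MVT_cor2 (fun t => hf t - Jn n t)
  (fun t => 68/100 / (t * sqrt t) - (Qn n / (t * t) - c / t)) a b lab
  (fun t ht => derivable_pt_lim_minus _ _ t _ _ (hderiv t ltac:(lra)) (Jderiv n t ltac:(lra))).
have [x2 [E2 [ya yb]]] := MVT_cor2 (fun t => hf t + Jn n t)
  (fun t => 68/100 / (t * sqrt t) + (Qn n / (t * t) - c / t)) a b lab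
  (fun t ht => derivable_pt_lim_plus _ _ t _ _ (hderiv t ltac:(lra)) (Jderiv n t ltac:(lra))).
have d1 := der_ok x1 ltac:(lra). have d2 := der_ok x2 ltac:(lra).
have := abs_le_inv _ _ d1. have := abs_le_inv _ _ d2. move=> [h1 h2] [h3 h4].
have p1 : 0 <= (68/100 / (x1 * sqrt x1) - (Qn n / (x1 * x1) - c / x1)) * (b - a) by apply: Rmult_le_pos; lra.
have p2 : 0 <= (68/100 / (x2 * sqrt x2) + (Qn n / (x2 * x2) - c / x2)) * (b - a) by apply: Rmult_le_pos; lra.
apply: Rabs_le. lra.
Qed.

Lemma I_lip_k k : forall n a b, (0 < n)%N -> INR n <= a -> a <= b -> b <= INR (n + k) + 1 ->
  Rabs (Iz b - Iz a) <= hf b - hf a.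
Proof.
elim: k => [|k IH] n a b n0 na ab bk.
- rewrite addn0 in bk. rewrite (I_eq_J n a) // ?(I_eq_J n b) //; try lra. exact: piece.
- have hm : INR (n + k) + 1 = INR (n + k).+1 by rewrite INR_Sn.
  have bk' : b <= INR (n + k).+1 + 1 by rewrite addnS in bk.
  case: (Rle_lt_dec b (INR (n + k) + 1)) => hb; first exact: (IH n a b n0 na ab hb).
  have n1 : (0 < (n + k).+1)%N by [].
  case: (Rle_lt_dec a (INR (n + k) + 1)) => ha.
  + have t1 := IH n a (INR (n + k) + 1) n0 na ha (Rle_refl _).
    have t2 : Rabs (Iz b - Iz (INR (n + k) + 1)) <= hf b - hf (INR (n + k) + 1).
      rewrite hm. rewrite (I_eq_J (n + k).+1 b) //; try lra.
      rewrite (I_eq_J (n + k).+1 (INR (n + k).+1)) //; try lra.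
      apply: piece => //; lra.
    have := Rabs_triang (Iz b - Iz (INR (n + k) + 1)) (Iz (INR (n + k) + 1) - Iz a).
    have -> : Iz b - Iz (INR (n + k) + 1) + (Iz (INR (n + k) + 1) - Iz a) = Iz b - Iz a by ring.
    lra.
  + rewrite (I_eq_J (n + k).+1 a) //; try lra. rewrite (I_eq_J (n + k).+1 b) //; try lra.
    apply: piece => //; lra.
Qed.

Lemma I_lip a b : 1 <= a -> a <= b -> Rabs (Iz b - Iz a) <= hf b - hf a.
Proof.
move=> a1 ab. set n := nat_floor a.
have [h1 h2] := base_Int_part a.
have hn : INR n = IZR (Int_part a).
  rewrite /n /nat_floor INR_IZR_INZ Z2Nat.id //. apply: le_IZR. lra.
have n0 : (0 < n)%N.
  apply/ltP. apply: INR_lt. rewrite hn /=. have : IZR (Int_part a) > 0 by lra. lra.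
set k := nat_floor b.
have [h3 h4] := base_Int_part b.
have hk : INR k = IZR (Int_part b).
  rewrite /k /nat_floor INR_IZR_INZ Z2Nat.id //. apply: le_IZR. lra.
apply: (I_lip_k k n a b n0) => //; first lra.
rewrite plus_INR hk. have := pos_INR n. lra.
Qed.

End Abel.

Lemma nat_floor_INR n : nat_floor (INR n) = n.
Proof. apply: nat_floor_eq; lra. Qed.

Section Final.
Variable c : R.
Hypothesis hyp : forall z : R, 1 <= z ->
  Rabs (sum_le (fun n => (IZR (mobius n))^2) z - c * z) <= 68/100 * sqrt z.

Definition Xz (z : R) := Sz z - c * ln z.

Lemma Q_over z : 1 <= z -> Rabs (Qz z / z - c) <= 68/100 / sqrt z.
Proof.
move=> z1. have z0 : 0 < z by lra. have s0 := sqrt_lt_R0 z z0.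
have ss := sqrt_sqrt z (Rlt_le _ _ z0).
have -> : Qz z / z - c = (Qz z - c * z) / z by field; lra.
rewrite /Rdiv Rabs_mult (Rabs_pos_eq (/ z)); last by left; apply: Rinv_0_lt_compat.
apply: Rle_trans (_ : 68 / 100 * sqrt z * / z <= _).
  apply: Rmult_le_compat_r; first by left; apply: Rinv_0_lt_compat. exact: hyp.
right. have gen : forall y, 0 < y -> 68/100 * y * / (y * y) = 68/100 * / y by move=> y y0; field; lra.
by have := gen (sqrt z) s0; rewrite ss.
Qed.

Lemma X_lip z w : 1 <= z -> z <= w -> Rabs (Xz z - Xz w) <= 204/100 / sqrt z.
Proof.
move=> z1 zw. have hI := I_lip c hyp z w z1 zw.
have q1 := Q_over z z1. have q2 := Q_over w ltac:(lra).
have -> : Xz z - Xz w = - (Iz c w - Iz c z) + (Qz z / z - c) + - (Qz w / w - c).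
  rewrite /Xz /Iz. ring.
have sz := sqrt_lt_R0 z ltac:(lra). have sw := sqrt_lt_R0 w ltac:(lra).
move: hI. rewrite /hf => hI.
have := Rabs_triang (- (Iz c w - Iz c z) + (Qz z / z - c)) (- (Qz w / w - c)).
have := Rabs_triang (- (Iz c w - Iz c z)) (Qz z / z - c).
rewrite !Rabs_Ropp. have : 0 < / sqrt w by apply: Rinv_0_lt_compat.
rewrite /Rdiv in q1 q2 hI *. lra.
Qed.

Lemma X_sq K : (0 < K)%N -> Xz (INR (K * K)) = Ssum (K * K) - c * (2 * ln (INR K)).
Proof.
move=> K0. rewrite /Xz /Sz /sum_le nat_floor_INR INR_muln ln_mult; try exact: INR_pos.
rewrite /Ssum /mu. congr (_ - _). ring.
Qed.

Lemma c_eq : c = limM.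
Proof.
set B := Rabs (Xz 1) + 204/100 + Rabs Lc + 12 + (Rabs euler_gamma + 2).
have bnd : forall K, (0 < K)%N -> Rabs ((c - limM) * (2 * ln (INR K))) <= B.
  move=> K K0. have hK := INR_ge1 _ K0.
  have x1 := X_lip 1 (INR (K * K)) ltac:(lra) ltac:(rewrite INR_muln; nra).
  rewrite sqrt_1 /Rdiv Rinv_1 Rmult_1_r in x1.
  have sa := S_asym K K0.
  have tb : tB K <= 4.
    rewrite /tB. have : 1 <= sqrt (INR K) by rewrite -sqrt_1; apply: sqrt_le_1_alt.
    move=> h. rewrite /Rdiv. have : / sqrt (INR K) <= 1 by rewrite -Rinv_1; apply: Rinv_le_contravar; lra.
    lra.
  have ta : tA K <= 1 by rewrite /tA -Rinv_1; apply: Rinv_le_contravar; lra.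
  have ta0 := tA0 K. have tb0 := tB0 K.
  rewrite X_sq // in x1.
  set A1 := Xz 1 - (Ssum (K * K) - c * (2 * ln (INR K))).
  set A2 := Ssum (K * K) - limM * (2 * ln (INR K)) - Lc.
  have -> : (c - limM) * (2 * ln (INR K)) = A1 + - Xz 1 + A2 + Lc by rewrite /A1 /A2; ring.
  have := Rabs_triang (A1 + - Xz 1 + A2) Lc.
  have := Rabs_triang (A1 + - Xz 1) A2.
  have := Rabs_triang A1 (- Xz 1).
  have hA1 : Rabs A1 <= 204/100 by exact: x1.
  have hA2 : Rabs A2 <= 3 * tB K + (Rabs euler_gamma + 2) * tA K by exact: sa.
  have : (Rabs euler_gamma + 2) * tA K <= Rabs euler_gamma + 2.
    have := Rabs_pos euler_gamma. move=> h. rewrite -{2}(Rmult_1_r (Rabs euler_gamma + 2)).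
    apply: Rmult_le_compat_l; lra.
  rewrite Rabs_Ropp /B. lra.
apply: NNPP => neq. have d0 : 0 < Rabs (c - limM) by apply: Rabs_pos_lt; lra.
have B0 : 0 <= B by have := bnd 1%N isT; have := Rabs_pos ((c - limM) * (2 * ln (INR 1))); lra.
have [K HK] := INR_unbounded (exp (B / (2 * Rabs (c - limM))) + 1).
have K0 : (0 < K)%N.
  case: K HK => [|K] //= HK. have := exp_pos (B / (2 * Rabs (c - limM))). lra.
have := bnd K K0. rewrite Rabs_mult.
have hK := INR_pos _ K0.
have : B / (2 * Rabs (c - limM)) < ln (INR K).
  rewrite -(ln_exp (B / (2 * Rabs (c - limM)))). apply: ln_increasing; first exact: exp_pos. lra.
move=> h1. have lnp : 0 < ln (INR K).
  apply: Rle_lt_trans h1. rewrite /Rdiv. apply: Rmult_le_pos => //.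
  left; apply: Rinv_0_lt_compat; lra.
move=> hb. have : B < Rabs (c - limM) * (2 * ln (INR K)).
  have e : B = Rabs (c - limM) * (2 * (B / (2 * Rabs (c - limM)))) by field; lra.
  rewrite {1}e. apply: Rmult_lt_compat_l => //. lra.
rewrite (Rabs_pos_eq (2 * ln (INR K))) in hb; lra.
Qed.

Lemma final z : 1 <= z -> Rabs (Xz z - Lc) <= 204/100 / sqrt z.
Proof.
move=> z1. apply: Rnot_lt_le => H. set eps := Rabs (Xz z - Lc) - 204/100 / sqrt z.
have e0 : 0 < eps by rewrite /eps; lra.
set G := Rabs euler_gamma + 2. have G0 : 0 < G by rewrite /G; have := Rabs_pos euler_gamma; lra.
have [N1 HN1] := tA_lim (eps / (2 * G)) ltac:(apply: Rdiv_lt_0_compat; lra).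
have [N2 HN2] := tB_lim (eps / 6) ltac:(lra).
have [N3 HN3] := INR_unbounded z.
set K := maxn (maxn N1 N2) (maxn N3 1).
have K0 : (0 < K)%N by rewrite /K !leq_max ltnSn !orbT.
have h1 := HN1 K ltac:(by rewrite /K !leq_max leqnn).
have h2 := HN2 K ltac:(by rewrite /K !leq_max leqnn !orbT).
have h3 : z <= INR K.
  have : INR N3 <= INR K by apply: le_INR; apply/leP; rewrite /K !leq_max leqnn !orbT.
  lra.
have hK := INR_ge1 _ K0.
have zK : z <= INR (K * K) by rewrite INR_muln; nra.
have x1 := X_lip z (INR (K * K)) z1 zK.
rewrite X_sq // c_eq in x1.
have sa := S_asym K K0.
have : G * tA K < eps / 2.
  have : G * (eps / (2 * G)) = eps / 2 by field; lra.
  have := tA0 K. nra.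
move=> h4.
have := Rabs_triang (Xz z - (Ssum (K * K) - limM * (2 * ln (INR K))))
                    (Ssum (K * K) - limM * (2 * ln (INR K)) - Lc).
have -> : Xz z - (Ssum (K * K) - limM * (2 * ln (INR K))) +
  (Ssum (K * K) - limM * (2 * ln (INR K)) - Lc) = Xz z - Lc by ring.
rewrite -/G in sa. rewrite /eps in e0 h2 h4. lra.
Qed.

End Final.

Theorem mainTheorem9 :
  (forall z : R, 1 <= z ->
     Rabs (sum_le (fun n => (IZR (mobius n))^2) z - 6 / PI^2 * z) <= 68/100 * sqrt z) ->
  forall z : R, 1 <= z ->
    Rabs (sum_le (fun n => (IZR (mobius n))^2 / INR n) z - ln z / zeta 2
          - (euler_gamma / zeta 2 - 2 * zeta'2 / (zeta 2)^2))
    <= 204/100 / sqrt z.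
Proof.
move=> hyp z z1.
have := final (6 / PI ^ 2) hyp z z1.
have ce := c_eq (6 / PI ^ 2) hyp.
rewrite zeta2_eq zeta'2_eq.
have mz := MZ_one. have mp := MZ'_PZ.
have Z0 : limZ <> 0 by move=> h; rewrite h Rmult_0_r in mz; lra.
have M0 : limM <> 0 by move=> h; rewrite h Rmult_0_l in mz; lra.
have eZ' : limZ' = - limP * limZ * limZ.
  have : limM * limZ' = - limP * limZ by lra.
  move=> h. apply: (Rmult_eq_reg_l limM) => //. rewrite h.
  have : limM = / limZ by field_simplify_eq; [lra | exact: Z0].
  move=> ->. field. exact: Z0.
have eM : limM = / limZ by field_simplify_eq; [lra | exact: Z0].
rewrite /Xz /Lc -ce.
have -> : sum_le (fun n : nat => IZR (mobius n) ^ 2 / INR n) z = Sz z by [].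
have -> : Sz z - ln z / limZ - (euler_gamma / limZ - 2 * - limZ' / limZ ^ 2) =
   Sz z - 6 / PI ^ 2 * ln z - (euler_gamma * limM - 2 * limP).
  rewrite ce eM eZ'. field. exact: Z0.
by rewrite ce.
Qed.
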